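(* Let $p$ be a prime and let $e\in\mathcal{B}(\mathbb{Q}_p(\mathbb{N}))$ be an idempotent. For $i\in\mathbb{N}$ let $e_i=e\delta_i\in\mathbb{Q}_p(\mathbb{N})$ be the $i$-th column of the matrix of $e$, and choose $n\in\mathbb{N}$ such that $e_i$ has all entries in $\mathbb{Z}_p$ for every $i>n$. Then there is an idempotent $f\in\mathcal{B}(\mathbb{Q}_p(\mathbb{N}))$ such that $fe=ef=f$, the image of $f$ is the finite-dimensional $\mathbb{Q}_p$-vector space $\sum_{i\in\mathbb{N},\,i\le n}\mathbb{Q}_p e_i$, and $e-f$ is an idempotent with $\|e-f\|\le1$.
   Context: $\mathbb{Q}_p(\mathbb{N})$ is the set of maps $\xi:\mathbb{N}\to\mathbb{Q}_p$ with $|\xi(i)|_p\le1$ for all but finitely many $i$, a $\mathbb{Z}_p$-module under coordinatewise operations, with the topology $\tau$ in which $A\subseteq\mathbb{Q}_p(\mathbb{N})$ is open iff for every finite $P\subseteq\mathbb{N}$ the set $A\cap\big(\prod_{i\in P}\mathbb{Q}_p\times\prod_{j\notin P}\mathbb{Z}_p\big)$ is open in the product topology. $\mathcal{B}(\mathbb{Q}_p(\mathbb{N}))$ is the algebra of $\tau$-continuous $\mathbb{Z}_p$-linear maps, with operator norm $\|T\|=\sup_{\|\xi\|\le1}\|T\xi\|$, $\|\xi\|=\max_i|\xi(i)|_p$. $\delta_i$ is the indicator function of $\{i\}$. *)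

(* Defs.v *)
From HB Require Import structures.
From mathcomp Require Import all_boot all_order all_algebra.
Set Implicit Arguments. Unset Strict Implicit. Unset Printing Implicit Defensive.
Import Order.TTheory GRing.Theory Num.Theory.
Local Open Scope ring_scope.

Definition padic_abs (p : nat) (q : rat) : rat :=
  if q == 0 then 0
  else (p%:R : rat) ^+ (logn p `|denq q|%N) / (p%:R : rat) ^+ (logn p `|numq q|%N).

(* "K together with nrm is (a model of) the field Q_p of p-adic numbers":
   nrm is a non-archimedean absolute value on K (values are rational,
   as every value of |.|_p is a power of p or 0), extending the p-adic
   absolute value of Q (embedded by ratr), K is complete for nrm and Q
   is dense in K.  This characterizes Q_p (the completion of Q for
   |.|_p) up to unique isometric isomorphism. *)
Record is_Qp (p : nat) (K : fieldType) (nrm : K -> rat) : Prop := IsQp {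
  Qp_nrm_ge0 : forall x, 0 <= nrm x;
  Qp_nrm_eq0 : forall x, nrm x = 0 <-> x = 0;
  Qp_nrmM : forall x y, nrm (x * y) = nrm x * nrm y;
  Qp_nrmD : forall x y, nrm (x + y) <= Num.max (nrm x) (nrm y);
  Qp_nrm_rat : forall q : rat, nrm (ratr q) = padic_abs p q;
  Qp_complete : forall u : nat -> K,
    (forall eps : rat, 0 < eps -> exists N, forall m n, (N <= m)%N -> (N <= n)%N ->
       nrm (u m - u n) < eps) ->
    exists l : K, forall eps : rat, 0 < eps -> exists N, forall n, (N <= n)%N ->
       nrm (u n - l) < eps;
  Qp_dense : forall (x : K) (eps : rat), 0 < eps ->
    exists q : rat, nrm (x - ratr q) < eps
}.

Section QpN.
Variables (K : fieldType) (nrm : K -> rat).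

Definition in_Zp (a : K) : Prop := nrm a <= 1.

Definition inQpN (xi : nat -> K) : Prop :=
  exists n : nat, forall i, (n < i)%N -> in_Zp (xi i).

Definition boxP (P : seq nat) (xi : nat -> K) : Prop :=
  forall j, j \notin P -> in_Zp (xi j).

(* A is tau-open: A is a subset of Q_p(N) and, for every finite P, A /\ boxP P
   is (relatively) open in boxP P for the product topology, i.e. every
   point of A /\ boxP P has a basic product neighbourhood (finitely many
   coordinates constrained) whose trace on boxP P lies in A. *)
Definition tau_open (A : (nat -> K) -> Prop) : Prop :=
  (forall xi, A xi -> inQpN xi) /\
  forall (P : seq nat) (xi : nat -> K), A xi -> boxP P xi ->
    exists (F : seq nat) (eps : rat), 0 < eps /\
      forall eta, boxP P eta -> (forall i, i \in F -> nrm (eta i - xi i) < eps) -> A eta.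

(* operators on Q_p(N) are represented by functions (nat -> K) -> (nat -> K);
   only their values on Q_p(N) matter. *)
Definition maps_QpN (T : (nat -> K) -> (nat -> K)) : Prop :=
  forall xi, inQpN xi -> inQpN (T xi).

Definition Zp_linear (T : (nat -> K) -> (nat -> K)) : Prop :=
  (forall xi eta, inQpN xi -> inQpN eta ->
     T (fun i => xi i + eta i) = (fun i => T xi i + T eta i)) /\
  (forall (a : K) xi, in_Zp a -> inQpN xi ->
     T (fun i => a * xi i) = (fun i => a * T xi i)).

Definition tau_continuous (T : (nat -> K) -> (nat -> K)) : Prop :=
  forall A, tau_open A -> tau_open (fun xi => inQpN xi /\ A (T xi)).

Definition inB (T : (nat -> K) -> (nat -> K)) : Prop :=
  [/\ maps_QpN T, Zp_linear T & tau_continuous T].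

Definition is_idempotent (T : (nat -> K) -> (nat -> K)) : Prop :=
  forall xi, inQpN xi -> T (T xi) = T xi.

(* ||xi|| = max_i |xi i|_p <= 1  iff every coordinate lies in Z_p *)
Definition vnorm_le1 (xi : nat -> K) : Prop := forall i, in_Zp (xi i).

Definition opnorm_le1 (T : (nat -> K) -> (nat -> K)) : Prop :=
  forall xi, inQpN xi -> vnorm_le1 xi -> vnorm_le1 (T xi).

End QpN.

Definition delta (K : fieldType) (i : nat) : nat -> K :=
  fun j => if j == i then 1 else 0.

Definition opsub (K : fieldType) (S T : (nat -> K) -> (nat -> K)) :
  (nat -> K) -> (nat -> K) := fun xi j => S xi j - T xi j.

(* Main.v *)
Require Import Defs.
From HB Require Import structures.
From mathcomp Require Import all_boot all_order all_algebra.
From Stdlib Require Import Classical FunctionalExtensionality.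
From mathcomp Require Import ring lra.
Import Order.TTheory GRing.Theory Num.Theory.
Local Open Scope ring_scope.
Set Implicit Arguments. Unset Strict Implicit. Unset Printing Implicit Defensive.

Section Aux.
Variables (p : nat) (K : fieldType) (nrm : K -> rat).
Hypothesis hK : is_Qp p nrm.

Lemma nrm0 : nrm 0 = 0.
Proof. by apply/(Qp_nrm_eq0 hK). Qed.

Lemma nrm_ge0 x : 0 <= nrm x.
Proof. exact: (Qp_nrm_ge0 hK). Qed.

Lemma nrm_neq0 x : x != 0 -> nrm x != 0.
Proof. by move=> hx; apply/eqP => /(Qp_nrm_eq0 hK) /eqP; rewrite (negbTE hx). Qed.

Lemma nrm_gt0 x : x != 0 -> 0 < nrm x.
Proof. by move=> hx; rewrite lt_def nrm_neq0 // nrm_ge0. Qed.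

Lemma nrm1 : nrm 1 = 1.
Proof.
have h := Qp_nrmM hK 1 1; rewrite mulr1 in h.
have h1 : nrm 1 != 0 by apply: nrm_neq0; exact: oner_neq0.
by apply: (mulfI h1); rewrite -h mulr1.
Qed.

Lemma nrmV x : x != 0 -> nrm x^-1 = (nrm x)^-1.
Proof.
move=> hx; have h := Qp_nrmM hK x x^-1; rewrite mulfV // nrm1 in h.
by rewrite -[nrm x^-1](mulKf (nrm_neq0 hx)) -h mulr1.
Qed.

Lemma nrmN x : nrm (- x) = nrm x.
Proof.
have h := Qp_nrmM hK (-1) (-1); rewrite mulrNN mulr1 nrm1 in h.
have h2 : nrm (-1) = 1.
  have h0 := nrm_ge0 (-1).
  have : (nrm (-1) - 1) * (nrm (-1) + 1) = 0 by rewrite mulrDr mulrBl -h; ring.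
  move/eqP; rewrite mulf_eq0 => /orP [|]; first by rewrite subr_eq0 => /eqP.
  move=> /eqP h3; have : 0 < nrm (-1) + 1 by apply: ltr_wpDl.
  by rewrite h3 ltxx.
by rewrite -mulN1r (Qp_nrmM hK) h2 mul1r.
Qed.

Lemma nrmD_le x y b : nrm x <= b -> nrm y <= b -> nrm (x + y) <= b.
Proof.
move=> hx hy; apply: le_trans (Qp_nrmD hK x y) _.
by rewrite ge_max hx hy.
Qed.

Lemma nrmD_lt x y b : nrm x < b -> nrm y < b -> nrm (x + y) < b.
Proof.
move=> hx hy; apply: le_lt_trans (Qp_nrmD hK x y) _.
by rewrite gt_max hx hy.
Qed.

Lemma nrmB_le x y b : nrm x <= b -> nrm y <= b -> nrm (x - y) <= b.
Proof. by move=> hx hy; apply: nrmD_le; rewrite ?nrmN. Qed.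

Lemma nrmB_lt x y b : nrm x < b -> nrm y < b -> nrm (x - y) < b.
Proof. by move=> hx hy; apply: nrmD_lt; rewrite ?nrmN. Qed.

Lemma nrm_sum_le (I : Type) (r : seq I) (P : pred I) (F : I -> K) b :
  0 <= b -> (forall i, P i -> nrm (F i) <= b) -> nrm (\sum_(i <- r | P i) F i) <= b.
Proof.
move=> hb hF; apply: (big_ind (fun x => nrm x <= b)) => //.
- by rewrite nrm0.
- by move=> x y; apply: nrmD_le.
Qed.

Lemma nrm_sum_lt (I : Type) (r : seq I) (P : pred I) (F : I -> K) b :
  0 < b -> (forall i, P i -> nrm (F i) < b) -> nrm (\sum_(i <- r | P i) F i) < b.
Proof.
move=> hb hF; apply: (big_ind (fun x => nrm x < b)) => //.
- by rewrite nrm0.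
- by move=> x y; apply: nrmD_lt.
Qed.

Lemma Zp0 : in_Zp nrm 0.
Proof. by rewrite /in_Zp nrm0. Qed.

Lemma ZpD x y : in_Zp nrm x -> in_Zp nrm y -> in_Zp nrm (x + y).
Proof. exact: nrmD_le. Qed.

Lemma ZpB x y : in_Zp nrm x -> in_Zp nrm y -> in_Zp nrm (x - y).
Proof. exact: nrmB_le. Qed.

Lemma ZpM x y : in_Zp nrm x -> in_Zp nrm y -> in_Zp nrm (x * y).
Proof.
rewrite /in_Zp (Qp_nrmM hK) => hx hy.
by rewrite -[1]mulr1; apply: ler_pM => //; apply: nrm_ge0.
Qed.

Lemma Zp_sum (I : Type) (r : seq I) (P : pred I) (F : I -> K) :
  (forall i, P i -> in_Zp nrm (F i)) -> in_Zp nrm (\sum_(i <- r | P i) F i).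
Proof. by move=> h; apply: nrm_sum_le. Qed.

End Aux.

Section Ops.
Variables (p : nat) (K : fieldType) (nrm : K -> rat).
Hypothesis hK : is_Qp p nrm.

Lemma seq_bound (s : seq nat) : exists m, forall i, i \in s -> (i <= m)%N.
Proof.
elim: s => [|a s [m hm]]; first by exists 0%N.
exists (maxn a m) => i; rewrite inE => /orP [/eqP ->|/hm him].
- by rewrite leq_maxl.
- by rewrite (leq_trans him) // leq_maxr.
Qed.

Lemma boxP_QpN P x : boxP nrm P x -> inQpN nrm x.
Proof.
move=> hx; have [m hm] := seq_bound P; exists m => i hi; apply: hx.
by apply/negP => /hm; rewrite leqNgt hi.
Qed.

Lemma fs_QpN (x : nat -> K) M : (forall i, (M <= i)%N -> x i = 0) -> inQpN nrm x.
Proof. move=> h; exists M => i hi; rewrite h ?(ltnW hi) //; exact: (Zp0 hK). Qed.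

Lemma QpN0 : inQpN nrm (fun _ : nat => (0 : K)).
Proof. exact: (@fs_QpN _ 0%N). Qed.

Lemma QpN_add (x y : nat -> K) : inQpN nrm x -> inQpN nrm y -> inQpN nrm (fun i => x i + y i).
Proof.
move=> [m hm] [m' hm']; exists (maxn m m') => i; rewrite gtn_max => /andP [h1 h2].
exact: (ZpD hK (hm _ h1) (hm' _ h2)).
Qed.

Lemma QpN_sub (x y : nat -> K) : inQpN nrm x -> inQpN nrm y -> inQpN nrm (fun i => x i - y i).
Proof.
move=> [m hm] [m' hm']; exists (maxn m m') => i; rewrite gtn_max => /andP [h1 h2].
exact: (ZpB hK (hm _ h1) (hm' _ h2)).
Qed.

Lemma sum_kron (g : nat -> K) M i :
  \sum_(l < M) g l * (if (l : nat) == i then 1 else 0) = if (i < M)%N then g i else 0.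
Proof.
elim: M => [|M IH]; first by rewrite big_ord0.
rewrite big_ord_recr /= IH.
case: (ltngtP i M) => h.
- by rewrite ltnS (ltnW h) mulr0 addr0.
- by rewrite ltnS leqNgt h /= mulr0 addr0.
- by rewrite h ltnSn mulr1 add0r.
Qed.

Lemma sum_delta (g : nat -> K) M i :
  \sum_(l < M) g l * delta K l i = if (i < M)%N then g i else 0.
Proof.
rewrite -sum_kron; apply: eq_bigr => l _; by rewrite /delta eq_sym.
Qed.

Lemma delta_QpN l : inQpN nrm (delta K l).
Proof. apply: (@fs_QpN _ l.+1) => i hi; rewrite /delta ifN //; by rewrite neq_ltn hi orbT. Qed.

Lemma fsum_QpN (c : nat -> K) M : inQpN nrm (fun i => \sum_(l < M) c l * delta K l i).
Proof. apply: (@fs_QpN _ M) => i hi; by rewrite sum_delta ifN // -leqNgt. Qed.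

Lemma scale_QpN (c : K) l : inQpN nrm (fun i => c * delta K l i).
Proof. apply: (@fs_QpN _ l.+1) => i hi; rewrite /delta ifN ?mulr0 //; by rewrite neq_ltn hi orbT. Qed.

Variable T : (nat -> K) -> (nat -> K).
Hypothesis hT : Zp_linear nrm T.

Lemma lin0 : T (fun _ => 0) = fun _ => 0.
Proof.
have h := (hT.1 _ _ QpN0 QpN0).
have e0 : (fun i : nat => (0:K) + 0) = (fun _ => 0) by apply: functional_extensionality => i; rewrite addr0.
rewrite e0 in h; apply: functional_extensionality => i.
have hi := congr1 (fun f => f i) h; simpl in hi.
by apply: (@addrI _ (T (fun _ => 0) i)); rewrite addr0 -hi.
Qed.


Lemma linD (x y : nat -> K) : inQpN nrm x -> inQpN nrm y ->
  T (fun i => x i + y i) = fun i => T x i + T y i.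
Proof. exact: hT.1. Qed.

Lemma linB (x y : nat -> K) : inQpN nrm x -> inQpN nrm y ->
  T (fun i => x i - y i) = fun i => T x i - T y i.
Proof.
move=> hx hy; have h := hT.1 _ _ (QpN_sub hx hy) hy.
have e1 : (fun i => x i - y i + y i) = x by apply: functional_extensionality => i; rewrite subrK.
rewrite e1 in h; apply: functional_extensionality => i; by rewrite h addrK.
Qed.

Lemma linZ (c : K) (x : nat -> K) : inQpN nrm x -> inQpN nrm (fun i => c * x i) ->
  T (fun i => c * x i) = fun i => c * T x i.
Proof.
move=> hx hcx; have [hc|hc] := leP (nrm c) 1; first exact: hT.2.
have c0 : c != 0 by apply/eqP => c0; move: hc; rewrite c0 (nrm0 hK) ltr10.
have hci : in_Zp nrm c^-1.
  by rewrite /in_Zp (nrmV hK) // invf_le1 ?(ltW hc) // (lt_trans ltr01 hc).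
have h := hT.2 _ _ hci hcx.
have e1 : (fun i => c^-1 * (c * x i)) = x by apply: functional_extensionality => i; rewrite mulKf.
rewrite e1 in h; apply: functional_extensionality => i; by rewrite h mulVKf.
Qed.

Lemma lin_fin (c : nat -> K) M :
  T (fun i => \sum_(l < M) c l * delta K l i) = fun i => \sum_(l < M) c l * T (delta K l) i.
Proof.
elim: M => [|M IH].
  have e1 : (fun i => \sum_(l < 0) c l * delta K l i) = fun _ => 0.
    by apply: functional_extensionality => i; rewrite big_ord0.
  rewrite e1 lin0; apply: functional_extensionality => i; by rewrite big_ord0.
have e1 : (fun i => \sum_(l < M.+1) c l * delta K l i) =
   fun i => (\sum_(l < M) c l * delta K l i) + c M * delta K M i.
  by apply: functional_extensionality => i; rewrite big_ord_recr.
rewrite e1 linD; [|exact: fsum_QpN|exact: scale_QpN].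
rewrite IH linZ; [|exact: delta_QpN|exact: scale_QpN].
by apply: functional_extensionality => i; rewrite big_ord_recr.
Qed.

End Ops.

Section Cont.
Variables (p : nat) (K : fieldType) (nrm : K -> rat).
Hypothesis hK : is_Qp p nrm.

Lemma ball_open r (c : K) (d : rat) :
  tau_open nrm (fun eta => inQpN nrm eta /\ nrm (eta r - c) < d).
Proof.
split; first by move=> xi [].
move=> P xi [hxi hb] _; exists [:: r], d; split.
  exact: le_lt_trans (nrm_ge0 hK _) hb.
move=> eta heta hF; split; first exact: boxP_QpN heta.
have h1 := hF r (mem_head _ _).
have -> : eta r - c = (eta r - xi r) + (xi r - c) by rewrite addrA subrK.
exact: (nrmD_lt hK h1 hb).
Qed.

Lemma big_open j : tau_open nrm (fun eta => inQpN nrm eta /\ 1 < nrm (eta j)).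
Proof.
split; first by move=> xi [].
move=> P xi [hxi hb] _; exists [:: j], 1; split; first exact: ltr01.
move=> eta heta hF; split; first exact: boxP_QpN heta.
have h1 := hF j (mem_head _ _).
case: (leP (nrm (eta j)) 1) => // hle.
have : nrm (xi j) <= 1.
  have -> : xi j = (xi j - eta j) + eta j by rewrite subrK.
  apply: (nrmD_le hK) => //; rewrite -opprB (nrmN hK); exact: ltW.
by rewrite leNgt hb.
Qed.

Lemma hi_int (T : (nat -> K) -> (nat -> K)) n : inB nrm T ->
  (forall i, (n < i)%N -> forall j, in_Zp nrm (T (delta K i) j)) ->
  forall xi, vnorm_le1 nrm xi -> (forall i, (i <= n)%N -> xi i = 0) ->
  vnorm_le1 nrm (T xi).
Proof.
move=> [hm hl hc] hn xi hxi hlo j.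
have hxiQ : inQpN nrm xi by exists 0%N => i _; exact: hxi.
rewrite /in_Zp; case: (leP (nrm (T xi j)) 1) => // hgt.
have [_ H] := hc _ (big_open j).
have [F [eps [heps HF]]] := H [::] xi (conj hxiQ (conj (hm _ hxiQ) hgt)) (fun j _ => hxi j).
have [M hM] := seq_bound F.
pose z := fun i => if (i < M.+1)%N then xi i else 0.
have ez : z = fun i => \sum_(l < M.+1) xi l * delta K l i.
  by apply: functional_extensionality => i; rewrite sum_delta.
have hz : boxP nrm [::] z.
  move=> i _; rewrite /z; case: ifP => _; [exact: hxi | exact: (Zp0 hK)].
have hcl : forall i, i \in F -> nrm (z i - xi i) < eps.
  by move=> i /hM hi; rewrite /z ltnS hi subrr (nrm0 hK).
have [_ [_ hz2]] := HF z hz hcl.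
move: hz2; rewrite ez (lin_fin hK hl) /=.
have : in_Zp nrm (\sum_(l < M.+1) xi l * T (delta K l) j).
  apply: (Zp_sum hK) => l _; case: (leqP l n) => hl'.
    by rewrite hlo // mul0r; exact: (Zp0 hK).
  exact: (ZpM hK (hxi l) (hn l hl' j)).
by rewrite /in_Zp => h1 h2; move: h1; rewrite leNgt h2.
Qed.

Lemma collect (T : (nat -> K) -> (nat -> K)) (hm : maps_QpN nrm T) (hc : tau_continuous nrm T)
  P xi (hxi : inQpN nrm xi) (hP : boxP nrm P xi) (d : rat) (hd : 0 < d) (g : nat -> nat) D :
  exists (F : seq nat) (eps : rat), 0 < eps /\ forall z, boxP nrm P z -> (forall i, i \in F -> nrm (z i - xi i) < eps) ->
    forall j, (j < D)%N -> nrm (T z (g j) - T xi (g j)) < d.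
Proof.
elim: D => [|D [F1 [e1 [he1 H1]]]]; first by exists [::], 1; split => //; exact: ltr01.
have [_ H] := hc _ (ball_open (g D) (T xi (g D)) d).
have hxi2 : inQpN nrm xi /\ (inQpN nrm (T xi) /\ nrm (T xi (g D) - T xi (g D)) < d).
  by split => //; split; [exact: hm | rewrite subrr (nrm0 hK)].
have [F2 [e2 [he2 H2]]] := H P xi hxi2 hP.
exists (F1 ++ F2), (Num.min e1 e2); split; first by rewrite lt_min he1 he2.
move=> z hz hcl j; rewrite ltnS leq_eqVlt => /orP [/eqP ->|hj].
- have hc2 : forall i, i \in F2 -> nrm (z i - xi i) < e2.
    by move=> i hi; have := hcl i; rewrite mem_cat hi orbT => /(_ isT); rewrite lt_min => /andP [].
  by have [_ [_ h]] := H2 z hz hc2.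
- apply: H1 => // i hi.
  by have := hcl i; rewrite mem_cat hi => /(_ isT); rewrite lt_min => /andP [].
Qed.

Definition Pw d (r : nat -> nat) (w : nat -> nat -> K) (x : nat -> K) i :=
  \sum_(j < d) x (r j) * w j i.

Lemma Pw_cont (T : (nat -> K) -> (nat -> K)) d r w : inB nrm T ->
  (forall j i, (j < d)%N -> in_Zp nrm (w j i)) ->
  tau_continuous nrm (fun xi i => Pw d r w (T xi) i).
Proof.
move=> [hm hl hc] hw A [HA1 HA2]; split; first by move=> xi [].
move=> P xi [hxi hA] hP.
have [m hmm] := HA1 _ hA.
have hbox : boxP nrm (iota 0 m.+1) (fun i => Pw d r w (T xi) i).
  move=> i; rewrite mem_iota /= add0n ltnS -ltnNge => hi; exact: hmm.
have [F [eps [heps HF]]] := HA2 _ _ hA hbox.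
pose dd := Num.min eps 1.
have hdd : 0 < dd by rewrite lt_min heps ltr01.
have [F' [eps' [heps' HF']]] := collect hm hc hxi hP hdd r d.
exists F', eps'; split => // z hz hcl; split; first exact: boxP_QpN hz.
have key := HF' z hz hcl.
have termlt : forall i, nrm (Pw d r w (T z) i - Pw d r w (T xi) i) < dd.
  move=> i; rewrite /Pw -sumrB; apply: (nrm_sum_lt hK) => // j _.
  rewrite -mulrBl (Qp_nrmM hK).
  have h1 := key j (ltn_ord j); have h2 := hw j i (ltn_ord j).
  apply: le_lt_trans h1; rewrite -[X in _ <= X]mulr1; apply: ler_wpM2l => //.
  exact: nrm_ge0 hK _.
have hdd1 : dd <= 1 by rewrite ge_min lexx orbT.
have hdde : dd <= eps by rewrite ge_min lexx.
apply: HF.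
- move=> i hi.
  have -> : Pw d r w (T z) i = Pw d r w (T xi) i + (Pw d r w (T z) i - Pw d r w (T xi) i).
    by rewrite addrC subrK.
  apply: (nrmD_le hK); first exact: hbox.
  exact: ltW (lt_le_trans (termlt i) hdd1).
- move=> i _; exact: lt_le_trans (termlt i) hdde.
Qed.

End Cont.

Lemma argmax_nat (g : nat -> rat) M : exists r, (r <= M)%N /\ forall i, (i <= M)%N -> g i <= g r.
Proof.
elim: M => [|M [r [hr H]]].
  by exists 0%N; split => // i; rewrite leqn0 => /eqP ->.
case: (leP (g r) (g M.+1)) => h.
- exists M.+1; split => // i; rewrite leq_eqVlt => /orP [/eqP ->|]; first exact: lexx.
  by rewrite ltnS => /H hi; apply: le_trans h.
- exists r; split; first exact: leqW.
  move=> i; rewrite leq_eqVlt => /orP [/eqP ->|]; first exact: ltW.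
  by rewrite ltnS => /H.
Qed.

Section Piv.
Variables (p : nat) (K : fieldType) (nrm : K -> rat).
Hypothesis hK : is_Qp p nrm.
Variable e : (nat -> K) -> (nat -> K).
Hypothesis heB : inB nrm e.
Hypothesis he : is_idempotent nrm e.

Definition E l := e (delta K l).

Definition inV k (x : nat -> K) := exists c : nat -> K, x = fun i => \sum_(l < k) c l * E l i.

Lemma inV_e k x : inV k x -> exists z, inQpN nrm z /\ x = e z.
Proof.
case: heB => hm hl hc [c ->].
exists (fun i => \sum_(l < k) c l * delta K l i); split; first exact: fsum_QpN hK c k.
by rewrite (lin_fin hK hl).
Qed.

Lemma inV_QpN k x : inV k x -> inQpN nrm x.
Proof. by case: heB => hm _ _ /inV_e [z [hz ->]]; apply: hm. Qed.

Lemma inV_fix k x : inV k x -> e x = x.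
Proof. by move=> /inV_e [z [hz ->]]; apply: he. Qed.

Lemma inV_0 k : inV k (fun _ => 0).
Proof.
exists (fun _ => 0); apply: functional_extensionality => i.
by rewrite big1 // => l _; rewrite mul0r.
Qed.

Lemma inV_add k x y : inV k x -> inV k y -> inV k (fun i => x i + y i).
Proof.
move=> [c ->] [c' ->]; exists (fun l => c l + c' l).
apply: functional_extensionality => i; rewrite -big_split; apply: eq_bigr => l _.
by rewrite mulrDl.
Qed.

Lemma inV_scale k (a : K) x : inV k x -> inV k (fun i => a * x i).
Proof.
move=> [c ->]; exists (fun l => a * c l).
apply: functional_extensionality => i; rewrite mulr_sumr; apply: eq_bigr => l _.
by rewrite mulrA.
Qed.

Lemma inV_sub k x y : inV k x -> inV k y -> inV k (fun i => x i - y i).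
Proof.
move=> hx hy; have := inV_add hx (inV_scale (-1) hy).
have -> : (fun i => x i + -1 * y i) = (fun i => x i - y i) by
  apply: functional_extensionality => i; rewrite mulN1r.
done.
Qed.

Lemma inV_sum k d (a : nat -> K) (w : nat -> nat -> K) :
  (forall j, (j < d)%N -> inV k (w j)) -> inV k (fun i => \sum_(j < d) a j * w j i).
Proof.
elim: d => [|d IH] hw.
  have -> : (fun i => \sum_(j < 0) a j * w j i) = (fun _ => 0) by
    apply: functional_extensionality => i; rewrite big_ord0.
  exact: inV_0.
have -> : (fun i => \sum_(j < d.+1) a j * w j i) =
    (fun i => \sum_(j < d) a j * w j i + a d * w d i) by
  apply: functional_extensionality => i; rewrite big_ord_recr.
apply: inV_add; first by apply: IH => j hj; apply: hw; exact: leqW.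
by apply: inV_scale; apply: hw.
Qed.

Lemma inV_S k x : inV k x -> inV k.+1 x.
Proof.
move=> [c ->]; exists (fun l => if (l < k)%N then c l else 0).
apply: functional_extensionality => i; rewrite big_ord_recr /= ltnn mul0r addr0.
by apply: eq_bigr => l _; rewrite ltn_ord.
Qed.

Lemma inV_E k : inV k.+1 (E k).
Proof.
exists (fun l => if l == k then 1 else 0).
apply: functional_extensionality => i; rewrite big_ord_recr /= eqxx mul1r.
by rewrite big1 ?add0r // => l _; rewrite ifN ?mul0r // neq_ltn ltn_ord.
Qed.

Lemma Pw_inV k d r w x : (forall j, (j < d)%N -> inV k (w j)) -> inV k (fun i => Pw d r w x i).
Proof. by move=> h; exact: (inV_sum (fun j => x (r j)) h). Qed.

Definition Inv k d (r : nat -> nat) (w : nat -> nat -> K) :=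
 [/\ forall j, (j < d)%N -> inV k (w j),
     forall j i, (j < d)%N -> in_Zp nrm (w j i),
     forall j l, (j < d)%N -> (l < d)%N -> w j (r l) = if j == l then 1 else 0
   & forall l, (l < k)%N -> forall i, Pw d r w (E l) i = E l i].

Lemma Pw_ext d r w r0 (u : nat -> K) x i :
  Pw d.+1 (fun j => if j == d then r0 else r j)
    (fun j i => if j == d then u i else w j i - w j r0 * u i) x i =
  Pw d r w x i - Pw d r w x r0 * u i + x r0 * u i.
Proof.
rewrite /Pw big_ord_recr /= !eqxx; congr (_ + _).
rewrite mulr_suml -sumrB; apply: eq_bigr => j _.
by rewrite ifN ?ifN ?neq_ltn ?ltn_ord // mulrBr mulrA.
Qed.

Lemma step k d r w : Inv k d r w -> exists d' r' w', Inv k.+1 d' r' w'.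
Proof.
move=> [I1 I2 I3 I4].
pose v := E k.
pose v' := fun i => v i - Pw d r w v i.
have hv' : inV k.+1 v'.
  apply: inV_sub; first exact: inV_E.
  by apply: inV_S; apply: Pw_inV.
have I1' : forall j, (j < d)%N -> inV k.+1 (w j) by move=> j hj; apply: inV_S; apply: I1.
case: (classic (exists i0, v' i0 != 0)) => [[i0 hi0]|hno].
2:{ exists d, r, w; split => //.
    move=> l; rewrite ltnS leq_eqVlt => /orP [/eqP ->|hl]; last exact: I4.
    move=> i; apply/eqP; rewrite eq_sym -subr_eq0; apply/negPn/negP => hne.
    by apply: hno; exists i. }
pose s := fun i => (v' i0)^-1 * v' i.
have [m hm] := inV_QpN (inV_scale (v' i0)^-1 hv').
pose M := maxn m i0.
have [r0 [hr0M hr0]] := argmax_nat (fun i => nrm (v' i)) M.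
have hn0 : 0 < nrm (v' i0) by apply: (nrm_gt0 hK).
have hmax : forall i, nrm (v' i) <= nrm (v' r0).
  move=> i; case: (leqP i M) => hi; first exact: hr0.
  apply: le_trans (hr0 i0 (leq_maxr _ _)).
  have := hm i (leq_ltn_trans (leq_maxl _ _) hi).
  by rewrite /in_Zp (Qp_nrmM hK) (nrmV hK) // ler_pdivrMl // mulr1.
have hr0nz : v' r0 != 0.
  apply/eqP => h0; have := lt_le_trans hn0 (hmax i0).
  by rewrite h0 (nrm0 hK) ltxx.
pose u := fun i => v' i / v' r0.
have hu1 : u r0 = 1 by rewrite /u divff.
have hv'rl : forall l, (l < d)%N -> v' (r l) = 0.
  move=> l hl; rewrite /v' /Pw.
  rewrite (eq_bigr (fun j : 'I_d => v (r j) * (if (j:nat) == l then 1 else 0))); last first.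
    by move=> j _; rewrite I3.
  by rewrite (sum_kron (fun j => v (r j))) hl subrr.
have hurl : forall l, (l < d)%N -> u (r l) = 0 by move=> l hl; rewrite /u hv'rl // mul0r.
have huint : forall i, in_Zp nrm (u i).
  move=> i; rewrite /in_Zp /u (Qp_nrmM hK) (nrmV hK) // ler_pdivrMr ?mul1r //.
  exact: (nrm_gt0 hK).
have huV : inV k.+1 u.
  suff -> : u = fun i => (v' r0)^-1 * v' i by apply: inV_scale.
  by apply: functional_extensionality => i; rewrite /u mulrC.
pose r' := fun j => if j == d then r0 else r j.
pose w' := fun j i => if j == d then u i else w j i - w j r0 * u i.
have hfix : forall y, (forall i, Pw d r w y i = y i) -> forall i, Pw d.+1 r' w' y i = y i.
  by move=> y hy i; rewrite /r' /w' Pw_ext !hy subrK.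
have hvfix : forall i, Pw d.+1 r' w' v i = v i.
  move=> i; rewrite /r' /w' Pw_ext -addrA [- _ + _]addrC -mulrBl.
  have -> : v r0 - Pw d r w v r0 = v' r0 by [].
  by rewrite /u (mulrC (v' r0)) divfK // /v' addrC subrK.
exists d.+1, r', w'; split.
- move=> j hj; rewrite /w'; case: (eqVneq j d) => hjd; first exact: huV.
  have hj' : (j < d)%N by rewrite ltn_neqAle hjd -ltnS.
  exact: (inV_sub (I1' j hj') (inV_scale (w j r0) huV)).
- move=> j i hj; rewrite /w'; case: (eqVneq j d) => hjd; first exact: huint.
  have hj' : (j < d)%N by rewrite ltn_neqAle hjd -ltnS.
  exact: (ZpB hK (I2 j i hj') (ZpM hK (I2 j r0 hj') (huint i))).
- move=> j l hj hl; rewrite /w' /r'.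
  case: (eqVneq j d) => hjd; case: (eqVneq l d) => hld; subst.
  + by rewrite eqxx hu1.
  + have hl' : (l < d)%N by rewrite ltn_neqAle hld -ltnS.
    by rewrite hurl // eq_sym (negbTE hld).
  + by rewrite hu1 mulr1 subrr (negbTE hjd).
  + have hl' : (l < d)%N by rewrite ltn_neqAle hld -ltnS.
    have hj' : (j < d)%N by rewrite ltn_neqAle hjd -ltnS.
    by rewrite hurl // mulr0 subr0 I3.
- move=> l; rewrite ltnS leq_eqVlt => /orP [/eqP ->|hl]; first exact: hvfix.
  by apply: hfix; apply: I4.
Qed.

Lemma build k : exists d r w, Inv k d r w.
Proof.
elim: k => [|k [d [r [w hI]]]]; last exact: step hI.
by exists 0%N, (fun _ => 0%N), (fun _ _ => 0); split.
Qed.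

Lemma Pw_fixV k d r w x : Inv k d r w -> inV k x -> forall i, Pw d r w x i = x i.
Proof.
move=> [_ _ _ I4] [c ->] i; rewrite /Pw.
under eq_bigr do rewrite mulr_suml.
rewrite exchange_big /=; apply: eq_bigr => l _.
rewrite -(I4 l (ltn_ord l) i) /Pw mulr_sumr; apply: eq_bigr => j _.
by rewrite mulrA.
Qed.

End Piv.

Unset Implicit Arguments.
Set Strict Implicit.

Theorem lemma3p13 (p : nat) (K : fieldType) (nrm : K -> rat)
  (hp : prime p) (hK : is_Qp p nrm)
  (e : (nat -> K) -> (nat -> K)) (heB : inB nrm e) (he : is_idempotent nrm e)
  (n : nat)
  (hn : forall i, (n < i)%N -> forall j, in_Zp nrm (e (delta K i) j)) :
  exists f : (nat -> K) -> (nat -> K),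
    [/\ inB nrm f /\ is_idempotent nrm f,
        (forall xi, inQpN nrm xi -> f (e xi) = f xi /\ e (f xi) = f xi),
        (forall eta : nat -> K,
           (exists xi, inQpN nrm xi /\ f xi = eta) <->
           (exists c : nat -> K,
              eta = (fun j => \sum_(i < n.+1) c i * e (delta K i) j))),
        is_idempotent nrm (opsub e f) &
        opnorm_le1 nrm (opsub e f)].
Proof.
have [d [r [w hI]]] := build hK heB n.+1.
have hI' := hI; case: hI' => I1 I2 I3 I4.
have [hm hl hc] := heB.
pose f := fun xi i => Pw d r w (e xi) i.
have hfV : forall xi, inV e n.+1 (f xi) by move=> xi; apply: Pw_inV.
have hfQ : forall xi, inQpN nrm (f xi) by move=> xi; apply: (inV_QpN hK heB (hfV xi)).
have heV : forall x, inV e n.+1 x -> e x = x by move=> x hx; apply: (inV_fix hK heB he hx).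
have hPV : forall x, inV e n.+1 x -> (fun i => Pw d r w x i) = x.
  by move=> x hx; apply: functional_extensionality => i; apply: (Pw_fixV hI hx).
have hfl : Zp_linear nrm f.
  split.
  - move=> xi eta hxi heta; rewrite /f (linD hl hxi heta).
    apply: functional_extensionality => i; rewrite /Pw -big_split; apply: eq_bigr => j _.
    by rewrite mulrDl.
  - move=> a xi ha hxi; rewrite /f (hl.2 a xi ha hxi).
    apply: functional_extensionality => i; rewrite /Pw mulr_sumr; apply: eq_bigr => j _.
    by rewrite mulrA.
have hfB : inB nrm f.
  split; [by move=> xi _; exact: (hfQ xi) | exact: hfl |].
  by apply: (Pw_cont hK r heB) => j i hj; apply: I2.
exists f; split.
- split => // xi hxi.
  by rewrite {1}/f (heV _ (hfV xi)) hPV.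
- move=> xi hxi; split; last exact: heV.
  by rewrite /f he.
- move=> eta; split.
  + by move=> [xi [hxi <-]]; exact: hfV.
  + move=> [c ->]; exists (fun i => \sum_(l < n.+1) c l * delta K l i); split.
      exact: fsum_QpN hK c n.+1.
    rewrite /f (lin_fin hK hl) hPV //; by exists c.
- move=> xi hxi; rewrite /opsub.
  rewrite (linB hK hl (hm _ hxi) (hfQ xi)) (linB hK hfl (hm _ hxi) (hfQ xi)).
  apply: functional_extensionality => j.
  rewrite he // (heV _ (hfV xi)).
  have -> : f (e xi) = f xi by rewrite /f he.
  have -> : f (f xi) = f xi by rewrite {1}/f (heV _ (hfV xi)) hPV.
  by rewrite subrr subr0.
- move=> xi hxi hv j; rewrite /opsub.
  pose xlo := fun i => \sum_(l < n.+1) xi l * delta K l i.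
  pose xhi := fun i => xi i - xlo i.
  have hlo : inQpN nrm xlo by exact: fsum_QpN hK xi n.+1.
  have ehi := linB hK hl hxi hlo.
  have hsplit : forall i, e xi i = e xlo i + e xhi i.
    by move=> i; rewrite /xhi ehi addrC subrK.
  have hloV : inV e n.+1 (e xlo) by rewrite /xlo (lin_fin hK hl); exists xi.
  have hfx : f xi j = Pw d r w (e xlo) j + Pw d r w (e xhi) j.
    by rewrite /f /Pw -big_split; apply: eq_bigr => l _; rewrite hsplit mulrDl.
  rewrite hfx (Pw_fixV hI hloV) hsplit opprD addrACA subrr add0r.
  have hxhi : vnorm_le1 nrm xhi.
    move=> i; rewrite /xhi /xlo sum_delta; case: ifP => _; first by rewrite subrr; exact: (Zp0 hK).
    by rewrite subr0; apply: hv.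
  have hxhi0 : forall i, (i <= n)%N -> xhi i = 0.
    by move=> i hi; rewrite /xhi /xlo sum_delta ltnS hi subrr.
  have := hi_int hK heB hn hxhi hxhi0 => hint.
  apply: (ZpB hK) => //.
  apply: (Zp_sum hK) => l _; apply: (ZpM hK (hint _) (I2 _ _ (ltn_ord l))).
Qed.
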